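(* Let $r\ge 1$ and $\mathbf{s}\in\mathbb{Z}^r$. Suppose $\boldsymbol{\lambda},\boldsymbol{\mu}\in\Lambda^{(r)}$ satisfy $(\boldsymbol{\lambda},\mathbf{s})\approx_e(\boldsymbol{\mu},\mathbf{s})$. Then $\Psi_r(\boldsymbol{\lambda},\mathbf{s})\approx_e\Psi_r(\boldsymbol{\mu},\mathbf{s})$ in $\mathcal{A}_e$.
   Context: Fix an integer $e\ge 2$. A partition is a weakly decreasing sequence $\lambda=(\lambda_1,\lambda_2,\dots)$ of non-negative integers with finite sum $|\lambda|$; $\Lambda$ denotes the set of partitions and $\Lambda^{(m)}$ the set of $m$-multipartitions, i.e. $m$-tuples $\boldsymbol\lambda=(\lambda^{(1)},\dots,\lambda^{(m)})$ of partitions, with $|\boldsymbol\lambda|=\sum_k|\lambda^{(k)}|$. A $\beta$-set is a subset $B\subseteq\mathbb{Z}$ containing all sufficiently small integers and no sufficiently large ones. For $\lambda\in\Lambda$ and $s\in\mathbb{Z}$ set $B_s(\lambda)=\{\lambda_i-i+s : i\ge 1\}$; every $\beta$-set equals $B_s(\lambda)$ for a unique pair $(\lambda,s)$. For $N\ge 2$ let $\mathcal{A}_N=\Lambda\times\mathbb{Z}$ (abacus configurations with $N$ runners: a bead at each position $b\in B_s(\lambda)$, position $b=aN+i$, $0\le i<N$, lying on runner $i$) and $\mathcal{A}_N^m=\Lambda^{(m)}\times\mathbb{Z}^m$, where $(\boldsymbol\lambda,\mathbf{s})$ is identified with the $m$-tuple of $\beta$-sets $(B_{s_1}(\lambda^{(1)}),\dots,B_{s_m}(\lambda^{(m)}))$.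 Blocks: for $(\boldsymbol\lambda,\mathbf{s})\in\mathcal{A}_N^m$, its $N$-residue multiset is the multiset of the values $s_k+y-x \bmod N$ over all nodes $(x,y,k)$ with $x\ge1$, $1\le y\le\lambda^{(k)}_x$, $1\le k\le m$. Define $(\boldsymbol\lambda,\mathbf{s})\approx_N(\boldsymbol\mu,\mathbf{s}')$ iff $\mathbf{s}=\mathbf{s}'$, $|\boldsymbol\lambda|=|\boldsymbol\mu|$ and the $N$-residue multisets coincide. Its equivalence classes are called blocks. (For $N=e$ these are exactly the sets of multipartitions indexing Specht modules in a common block of the Ariki–Koike algebra $\mathcal{H}_{m,n}(q,(q^{s_1},\dots,q^{s_m}))$, $q$ a primitive $e$-th root of unity.) Uglov's map: for $1\le k\le r$ define $\psi_k:\mathbb{Z}\to\mathbb{Z}$ by $\psi_k(ae+i)=((a+1)r-k)e+i$ for $a\in\mathbb{Z}$, $0\le i<e$. For $(\boldsymbol\lambda,\mathbf{s})\in\mathcal{A}_e^r$ the set $B=\bigsqcup_{k=1}^r\psi_k(B_{s_k}(\lambda^{(k)}))$ is a $\beta$-set, and $\Psi_r(\boldsymbol\lambda,\mathbf{s})$ is the unique $(\tilde\lambda,\tilde s)\in\mathcal{A}_e$ with $B_{\tilde s}(\tilde\lambda)=B$. $\Psi_r:\mathcal{A}_e^r\to\mathcal{A}_e$ is a bijection; $\Phi_r=\Psi_r^{-1}$. *)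

(* Defs.v *)
From mathcomp Require Import all_boot all_order all_algebra.
Set Implicit Arguments. Unset Strict Implicit. Unset Printing Implicit Defensive.
Import Order.TTheory GRing.Theory Num.Theory.
Local Open Scope ring_scope.

(* A partition: a weakly decreasing list of positive parts (trailing zeros
   of the infinite sequence dropped); lambda_i = nth 0 l (i-1). *)
Definition is_part (l : seq nat) : bool :=
  sorted geq l && all (fun x => (0 < x)%N) l.

Definition beta_set (s : int) (l : seq nat) (b : int) : Prop :=
  exists i : nat, b = (nth 0%N l i)%:Z - (i.+1)%:Z + s.

(* number of nodes (x,y,k) of (lam, s) with N-residue s_k + y - x = c mod N
   (0-indexed x,y here: node (x+1,y+1,k)) *)
Definition res_count (N : nat) (m : nat) (lam : 'I_m -> seq nat)
  (s : 'I_m -> int) (c : int) : nat :=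
  (\sum_(k < m) \sum_(x < size (lam k)) \sum_(y < nth 0%N (lam k) x)
     (((s k + y%:Z - x%:Z) %% N%:Z)%Z == c))%N.

Definition msize (m : nat) (lam : 'I_m -> seq nat) : nat :=
  (\sum_(k < m) sumn (lam k))%N.

Definition block_equiv (N m : nat) (lam : 'I_m -> seq nat) (s : 'I_m -> int)
  (mu : 'I_m -> seq nat) (s' : 'I_m -> int) : Prop :=
  s =1 s' /\ msize lam = msize mu /\
  forall c : int, res_count N lam s c = res_count N mu s' c.

Definition block_equiv1 (N : nat) (l : seq nat) (s : int) (l' : seq nat) (s' : int)
  : Prop :=
  block_equiv N (fun _ : 'I_1 => l) (fun _ => s) (fun _ => l') (fun _ => s').

(* psi_k (a e + i) = ((a+1) r - k) e + i, 0 <= i < e; k = k0 + 1 with k0 : 'I_r *)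
Definition psi (e r : nat) (k0 : nat) (b : int) : int :=
  (((b %/ e%:Z)%Z + 1) * r%:Z - (k0.+1)%:Z) * e%:Z + (b %% e%:Z)%Z.

Definition uglov_set (e r : nat) (lam : 'I_r -> seq nat) (s : 'I_r -> int)
  (b : int) : Prop :=
  exists (k : 'I_r) (b' : int), beta_set (s k) (lam k) b' /\ b = psi e r k b'.

Definition Psi_rel (e r : nat) (lam : 'I_r -> seq nat) (s : 'I_r -> int)
  (lt : seq nat) (st : int) : Prop :=
  is_part lt /\ forall b : int, beta_set st lt b <-> @uglov_set e r lam s b.
Arguments Psi_rel e {r} lam s lt st.
Arguments block_equiv N {m} lam s mu s'.

(* Main.v *)
Require Import Defs.
From mathcomp Require Import all_boot all_order all_algebra zify ring lra.
Set Implicit Arguments. Unset Strict Implicit. Unset Printing Implicit Defensive.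
Import Order.TTheory GRing.Theory Num.Theory.
Local Open Scope ring_scope.

Lemma le_mulD (X Y e rho : int) : 0 < e -> 0 <= rho < e ->
  (Y * e <= X * e + rho) = (Y <= X).
Proof.
move=> he hr; apply/idP/idP => H.
  case: (lerP Y X) => // hXY. have : (X + 1) * e <= Y * e by rewrite ler_pM2r //; lia. lia.
have : Y * e <= X * e by rewrite ler_pM2r. lia.
Qed.

Lemma psiE e r k b : (0 < e)%N ->
  psi e r k b = b + ((r%:Z - 1) * (b %/ e%:Z)%Z + (r%:Z - k%:Z - 1)) * e%:Z.
Proof. move=> he; rewrite /psi. have := divz_eq b e%:Z. lia. Qed.

Lemma psi_ge e r (k : 'I_r) b A : (0 < e)%N ->
  (A * r%:Z * e%:Z <= psi e r k b) = (A * e%:Z <= b).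
Proof.
move=> he; rewrite /psi.
have := ltn_ord k.
have -> : b = (b %/ e%:Z)%Z * e%:Z + (b %% e%:Z)%Z by apply: divz_eq.
have : (0 <= b %% e%:Z < e%:Z)%Z by lia.
have -> : (((b %/ e%:Z)%Z * e%:Z + (b %% e%:Z)%Z) %% e%:Z)%Z = (b %% e%:Z)%Z.
  by rewrite modzMDl modz_mod.
have -> : (((b %/ e%:Z)%Z * e%:Z + (b %% e%:Z)%Z) %/ e%:Z)%Z = (b %/ e%:Z)%Z.
  rewrite divzMDl; last by lia. have -> : divz (modz b e%:Z) e%:Z = 0 by apply: divz_small; lia.
  by rewrite addr0.
move: (b %% e%:Z)%Z (b %/ e%:Z)%Z => rho q hr hk.
have H1 : (A * r%:Z * e%:Z <= ((q+1)*r%:Z - k.+1%:Z) * e%:Z + rho) = (A*r%:Z <= (q+1)*r%:Z - k.+1%:Z).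
  by rewrite -mulrA mulrA; apply: le_mulD; lia.
have H2 : (A * e%:Z <= q * e%:Z + rho) = (A <= q) by apply: le_mulD; lia.
have H3 : (A*r%:Z <= q*r%:Z + (r%:Z - k.+1%:Z)) = (A <= q) by apply: le_mulD; lia.
rewrite H1 H2 -H3; apply/idP/idP => ?; lia.
Qed.

Lemma divmodE (a rho e : int) : 0 < e -> 0 <= rho < e ->
  divz (a * e + rho) e = a /\ modz (a * e + rho) e = rho.
Proof.
move=> he hr; split.
  rewrite divzMDl; last by lia.
  have -> : divz rho e = 0 by apply: divz_small; lia.
  by rewrite addr0.
by rewrite modzMDl modz_small //; lia.
Qed.

Lemma psi_divmod e r k b : (0 < e)%N ->
  divz (psi e r k b) e%:Z = ((divz b e%:Z) + 1) * r%:Z - k.+1%:Z /\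
  modz (psi e r k b) e%:Z = modz b e%:Z.
Proof.
move=> he; rewrite /psi; apply: divmodE; lia.
Qed.

Lemma psi_inj e r (k k' : 'I_r) b b' : (0 < e)%N ->
  psi e r k b = psi e r k' b' -> k = k' /\ b = b'.
Proof.
move=> he H.
have [d1 m1] := psi_divmod r k b he.
have [d2 m2] := psi_divmod r k' b' he.
rewrite H d2 in d1. rewrite H m2 in m1.
have hk := ltn_ord k. have hk' := ltn_ord k'.
have hq : divz b' e%:Z = divz b e%:Z by nia.
have hkk : k = k' :> nat by nia.
split; first exact: ord_inj.
by rewrite (divz_eq b e%:Z) (divz_eq b' e%:Z) hq m1.
Qed.

Lemma psi_surj e r b A : (0 < e)%N -> (0 < r)%N -> b < A * r%:Z * e%:Z ->
  exists (k : 'I_r) b', b' < A * e%:Z /\ b = psi e r k b'.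
Proof.
move=> he hr hb.
set Q := divz b e%:Z. set rho := modz b e%:Z.
have hrho : 0 <= rho < e%:Z by rewrite /rho; lia.
have hbE : b = Q * e%:Z + rho by rewrite /Q /rho -divz_eq.
set kk := modz (-(Q+1)) r%:Z.
have hkk : 0 <= kk < r%:Z by rewrite /kk; lia.
have hkr : (absz kk < r)%N by lia.
set t := divz (-(Q+1)) r%:Z.
have htE : -(Q+1) = t * r%:Z + kk by rewrite /t /kk -divz_eq.
exists (Ordinal hkr), ((-t - 1) * e%:Z + rho).
have hQ : Q < A * r%:Z.
  have := @le_mulD Q (A * r%:Z) e%:Z rho.
  rewrite -hbE -mulrA => h. have : ~~ (A * r%:Z <= Q).
    rewrite -h; [|lia|lia]. rewrite -mulrA in hb. by rewrite -ltNge.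
  lia.
have hta : -t < A + 1.
  have : (-t) * r%:Z < (A + 1) * r%:Z by nia.
  rewrite ltr_pM2r //; lia.
split.
  have := @le_mulD (-t - 1) A e%:Z rho.
  move=> h. rewrite ltNge h; [|lia|lia]. lia.
rewrite /psi. have [-> ->] := @divmodE (-t - 1) rho e%:Z ltac:(lia) hrho.
rewrite /= hbE. have hab : (absz kk)%:Z = kk by lia.
nia.
Qed.

Definition bead (s : int) (l : seq nat) (i : nat) : int :=
  (nth 0%N l i)%:Z - (i.+1)%:Z + s.
Definition blist s l (n : nat) := map (bead s l) (iota 0 n).

Lemma part_nth_le l i j : is_part l -> (i <= j)%N -> (nth 0 l j <= nth 0 l i)%N.
Proof.
case/andP=> hs _ hij.
case: (ltnP j (size l)) => hj; last by rewrite nth_default.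
have hi : (i < size l)%N by apply: leq_ltn_trans hj.
have gtr : transitive geq by move=> a b c /= h1 h2; apply: leq_trans h2 h1.
have grf : reflexive geq by move=> a /=.
exact: (sorted_leq_nth gtr grf 0%N hs).
Qed.

Lemma bead_lt s l i j : is_part l -> (i < j)%N -> bead s l j < bead s l i.
Proof. move=> hl hij; have := part_nth_le hl (ltnW hij); rewrite /bead; lia. Qed.

Lemma bead_ge s l i : s - (i.+1)%:Z <= bead s l i.
Proof. rewrite /bead; lia. Qed.

Lemma bead_big s l i : (size l <= i)%N -> bead s l i = s - (i.+1)%:Z.
Proof. move=> h; rewrite /bead nth_default //; lia. Qed.

Lemma blist_uniq s l n : is_part l -> uniq (blist s l n).
Proof.
move=> hl; rewrite map_inj_in_uniq ?iota_uniq // => i j _ _ hij.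
apply/eqP; case: (ltngtP i j) => // h.
  by have := bead_lt s hl h; rewrite hij ltxx.
by have := bead_lt s hl h; rewrite hij ltxx.
Qed.

Lemma beta_beadE s l b : beta_set s l b <-> exists i, b = bead s l i.
Proof. by []. Qed.

Lemma beta_low s l b : b < s - (size l)%:Z -> beta_set s l b.
Proof.
move=> hb; exists (absz (s - b - 1)%R).
rewrite nth_default; lia.
Qed.

Lemma beta_geP s l L b : is_part l -> L <= s - (size l)%:Z ->
  (beta_set s l b /\ L <= b) <-> b \in blist s l (absz (s - L)%R).
Proof.
move=> hl hL; split.
  case=> [[i ->]] hb; apply/mapP; exists i => //; rewrite mem_iota /=.
  case: (ltnP i (absz (s - L)%R)) => // hi.
  have : (size l <= i)%N by lia.
  move=> hh; rewrite nth_default // in hb; lia.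
case/mapP=> i; rewrite mem_iota /= => hi ->; split; first by exists i.
have := bead_ge s l i; lia.
Qed.


Definition ge_int : rel int := fun x y => y <= x.

Lemma build (L : int) (T : seq int) :
  sorted ge_int T -> uniq T -> all (fun b => L <= b) T ->
  exists l st, is_part l /\ st = L + (size T)%:Z /\
    forall b, beta_set st l b <-> (b \in T \/ b < L).
Proof.
elim: T => [|t T IH] /=.
  move=> _ _ _; exists [::], L; split => //; split; first by rewrite addr0.
  move=> b; split.
    by case=> i ->; right; rewrite nth_nil; lia.
  case=> // hb; exists (absz (L - b - 1)%R); rewrite nth_nil; lia.
move=> hs /andP[tT hu] /andP[hLt hall].
have hp : path ge_int t T by [].
have hsT : sorted ge_int T by apply: path_sorted hp.
have gtr : transitive ge_int by move=> a b c /= h1 h2; apply: le_trans h2 h1.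
have hmin : all (ge_int t) T by apply: order_path_min.
have [l' [s' [hl' [hs' hb']]]] := IH hsT hu hall.
have h0 : (nth 0 l' 0)%:Z - 1 + s' < t.
  have : beta_set s' l' ((nth 0 l' 0)%:Z - 1 + s') by exists 0%N.
  case/hb' => [hin|]; last by lia.
  have := allP hmin _ hin; rewrite /ge_int le_eqVlt => /orP[/eqP he|//].
  by move: tT; rewrite -he hin.
set l := if (0 < t - s') then absz (t - s')%R :: l' else [::].
have nthE : forall i, nth 0%N l i = nth 0%N (absz (t - s')%R :: l') i.
  rewrite /l; case: ifP => // hts i.
  have hl'0 : l' = [::].
    case E: l' => [//|a l'']; move: hl' h0; rewrite E => /andP[_ /= /andP[ha _]] /=; lia.
  have -> : absz (t - s')%R = 0%N by rewrite hl'0 /= in h0; lia.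
  rewrite hl'0; case: i => [|[|i]] //.
exists l, (s' + 1); split.
  rewrite /l; case: ifP => // hts.
  move: hl'; rewrite /is_part /= => /andP[hs1 hp1]; apply/andP; split.
    case E: l' => [//|a l'']; move: hs1 hp1 h0; rewrite E /= => -> _ ha; rewrite andbT; lia.
  rewrite hp1 andbT; lia.
split; first by rewrite hs'; lia.
move=> b; split.
  case=> i; rewrite nthE; case: i => [|i] /= ->.
    by left; rewrite inE; apply/orP; left; apply/eqP; lia.
  have : beta_set s' l' ((nth 0 l' i)%:Z - (i.+1)%:Z + s') by exists i.
  have hE : (nth 0%N l' i)%:Z - (i.+2)%:Z + (s' + 1) = (nth 0%N l' i)%:Z - (i.+1)%:Z + s' by lia.
  rewrite hE; case/hb' => [hin|hlt]; [left; by rewrite inE hin orbT | by right].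
rewrite inE => hb.
have : b == t \/ beta_set s' l' b.
  case: hb => [/orP[->|hin]|hlt]; [by left| right; apply/hb'; by left | right; apply/hb'; by right].
case=> [/eqP ->|[i ->]].
  exists 0%N; rewrite nthE /=; lia.
exists i.+1; rewrite nthE /=; lia.
Qed.

Definition D (F : int -> int) (s : int) (l : seq nat) : int :=
  \sum_(0 <= i < size l) (F (bead s l i) - F (s - (i.+1)%:Z)).

Lemma sum_blist F s l n : (size l <= n)%N ->
  \sum_(b <- blist s l n) F b = \sum_(0 <= i < n) F (s - (i.+1)%:Z) + D F s l.
Proof.
move=> hn; rewrite big_map /D /index_iota !subn0.
rewrite (eq_bigr (fun i => (F (bead s l i) - F (s - (i.+1)%:Z)) + F (s - (i.+1)%:Z))); last by move=> i _; ring.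
rewrite big_split /= addrC; congr (_ + _).
rewrite -(subnKC hn) iotaD big_cat /= add0n.
rewrite [X in _ + X]big1_seq ?addr0 // => i /andP[_]; rewrite mem_iota => /andP[hi _].
by rewrite bead_big // subrr.
Qed.

Lemma D_lin F G a c s l :
  D (fun b => F b + a * G b + c) s l = D F s l + a * D G s l.
Proof. rewrite /D mulr_sumr -big_split; apply: eq_bigr => i _ /=; ring. Qed.

Lemma sumn_int (l : seq nat) : (sumn l)%:Z = \sum_(x <- l) x%:Z.
Proof. by elim: l => [|a l IH]; rewrite ?big_nil ?big_cons //= PoszD IH. Qed.

Lemma D_id s l : D id s l = (sumn l)%:Z.
Proof.
rewrite sumn_int (big_nth 0%N) /D; apply: eq_bigr => i _; rewrite /bead /=; lia.
Qed.

Definition g (e : nat) (c : int) (b : int) : int := divz (b - c) e%:Z.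

Definition rc (e : nat) (s : int) (l : seq nat) (c : int) : nat :=
  (\sum_(x < size l) \sum_(y < nth 0%N l x) (((s + y%:Z - x%:Z) %% e%:Z)%Z == c))%N.

Lemma g_step e c t : (0 < e)%N -> 0 <= c < e%:Z ->
  g e c (t + 1) - g e c t = (((t + 1) %% e%:Z)%Z == c : nat)%:Z.
Proof.
move=> he hc; rewrite /g.
have hE := divz_eq (t - c) e%:Z.
have hr : 0 <= modz (t - c) e%:Z < e%:Z by lia.
move: hE hr; set q := divz (t - c) e%:Z; set rho := modz (t - c) e%:Z => hE hr.
have he' : 0 < e%:Z by lia.
case: (ltrP (rho + 1) e%:Z) => h1.
  have -> : t + 1 - c = q * e%:Z + (rho + 1) by lia.
  have [-> _] := divmodE q he' (ltac:(lia) : 0 <= rho + 1 < e%:Z).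
  case: (ltrP (rho + 1 + c) e%:Z) => h2.
    have -> : t + 1 = q * e%:Z + (rho + 1 + c) by lia.
    have [_ ->] := divmodE q he' (ltac:(lia) : 0 <= rho + 1 + c < e%:Z).
    case: eqP => /= H; lia.
  have -> : t + 1 = (q + 1) * e%:Z + (rho + 1 + c - e%:Z) by lia.
  have [_ ->] := divmodE (q + 1) he' (ltac:(lia) : 0 <= rho + 1 + c - e%:Z < e%:Z).
  case: eqP => /= H; lia.
have -> : t + 1 - c = (q + 1) * e%:Z + 0 by lia.
have h0e : 0 <= (0:int) < e%:Z by lia.
have [-> _] := divmodE (q + 1) he' h0e.
have -> : t + 1 = (q + 1) * e%:Z + c by lia.
have [_ ->] := divmodE (q + 1) he' hc.
rewrite eqxx /=; lia.
Qed.

Lemma g_row e c u m : (0 < e)%N -> 0 <= c < e%:Z ->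
  g e c (u + m%:Z) - g e c u =
  (\sum_(y < m) (((u + 1 + y%:Z) %% e%:Z)%Z == c : nat))%N%:Z.
Proof.
move=> he hc; elim: m => [|m IH]; first by rewrite big_ord0 addr0 subrr.
rewrite big_ord_recr /= PoszD -IH.
have := g_step (u + m%:Z) he hc.
have -> : u + m%:Z + 1 = u + (m.+1)%:Z by lia.
have -> : u + 1 + m%:Z = u + (m.+1)%:Z by lia.
move=> <-; ring.
Qed.

Lemma D_g e c s l : (0 < e)%N -> 0 <= c < e%:Z -> D (g e c) s l = (rc e s l c)%:Z.
Proof.
move=> he hc; rewrite /D /rc big_mkord.
rewrite (big_morph Posz PoszD (erefl _)).
apply: eq_bigr => x _.
have -> : bead s l x = (s - (x.+1)%:Z) + (nth 0%N l x)%:Z by rewrite /bead; lia.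
rewrite g_row //; congr Posz; apply: eq_bigr => y _.
by have -> : s - (x.+1)%:Z + 1 + y%:Z = s + y%:Z - x%:Z by lia.
Qed.

Definition nk (e : nat) (s : int) (A : int) : nat := absz (s - A * e%:Z)%R.

Definition ulist (e r : nat) (lam : 'I_r -> seq nat) (s : 'I_r -> int) (A : int) :=
  [seq psi e r k b | k : 'I_r <- enum 'I_r, b <- blist (s k) (lam k) (nk e (s k) A)].

Section Ug.
Variables (e r : nat) (lam : 'I_r -> seq nat) (s : 'I_r -> int) (A : int).
Hypotheses (he : (0 < e)%N) (hlam : forall k, is_part (lam k))
  (hA : forall k, A * e%:Z <= s k - (size (lam k))%:Z).

Lemma ulistP b : (uglov_set e lam s b /\ A * r%:Z * e%:Z <= b) <-> b \in @ulist e r lam s A.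
Proof.
split.
  case=> [[k [b' [hb' ->]]]]; rewrite psi_ge // => hle.
  apply/allpairsPdep; exists k, b'; split => //; first by rewrite mem_enum.
  by apply/beta_geP.
case/allpairsPdep=> k [b' [_ hin ->]].
have [hb hle] := (beta_geP b' (hlam k) (hA k)).2 hin.
by split; [exists k, b' | rewrite psi_ge].
Qed.

Lemma ulist_uniq : uniq (@ulist e r lam s A).
Proof.
apply: allpairs_uniq_dep; first exact: enum_uniq.
  by move=> k _; apply: blist_uniq.
move=> [k1 b1] [k2 b2] _ _ /= H.
by have [-> ->] := psi_inj he H.
Qed.

Lemma uglov_low b : (0 < r)%N -> b < A * r%:Z * e%:Z -> uglov_set e lam s b.
Proof.
move=> hr hb; have [k [b' [hb' ->]]] := psi_surj he hr hb.
exists k, b'; split => //; apply: beta_low.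
have := hA k; lia.
Qed.

End Ug.

Lemma ge_int_total : total ge_int.
Proof. by move=> x y; rewrite /ge_int le_total. Qed.

Lemma Psi_exists e r (lam : 'I_r -> seq nat) (s : 'I_r -> int) A :
  (0 < e)%N -> (0 < r)%N -> (forall k, is_part (lam k)) ->
  (forall k, A * e%:Z <= s k - (size (lam k))%:Z) ->
  exists lt st, Psi_rel e lam s lt st.
Proof.
move=> he hr hlam hA.
set U := @ulist e r lam s A.
have hsort : sorted ge_int (sort ge_int U) by apply: sort_sorted; exact: ge_int_total.
have huniq : uniq (sort ge_int U) by rewrite sort_uniq; apply: ulist_uniq.
have hall : all (fun b => A * r%:Z * e%:Z <= b) (sort ge_int U).
  apply/allP => b; rewrite mem_sort => /(ulistP he hlam hA b) [] //.
have [l [st [hl [_ hb]]]] := build hsort huniq hall.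
exists l, st; split => // b; rewrite hb mem_sort; split.
  case=> [/(ulistP he hlam hA b) []//|]; exact: uglov_low.
move=> hu; case: (lerP (A * r%:Z * e%:Z) b) => hle.
  by left; apply/(ulistP he hlam hA b).
by right.
Qed.

Lemma D_const F c s l : D (fun b => F b + c) s l = D F s l.
Proof. rewrite /D; apply: eq_bigr => i _; ring. Qed.

Lemma D_ext F G s l : F =1 G -> D F s l = D G s l.
Proof. by move=> h; rewrite /D; apply: eq_bigr => i _; rewrite !h. Qed.

Section Key.
Variables (e r : nat) (lam : 'I_r -> seq nat) (s : 'I_r -> int) (A : int).
Variables (lt : seq nat) (st : int).
Hypotheses (he : (0 < e)%N) (hlam : forall k, is_part (lam k))
  (hA : forall k, A * e%:Z <= s k - (size (lam k))%:Z)
  (hPsi : Psi_rel e lam s lt st) (hAt : A * r%:Z * e%:Z <= st - (size lt)%:Z).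

Lemma perm_tilde :
  perm_eq (blist st lt (absz (st - A * r%:Z * e%:Z)%R)) (@ulist e r lam s A).
Proof.
have [hlt hb] := hPsi.
apply: uniq_perm; [exact: blist_uniq | exact: ulist_uniq |].
move=> b; apply/idP/idP.
  move/(beta_geP b hlt hAt) => [hb1 hb2]; apply/(ulistP he hlam hA b); split => //.
  by apply/hb.
move/(ulistP he hlam hA b) => [hb1 hb2]; apply/(beta_geP b hlt hAt); split => //.
by apply/hb.
Qed.

Lemma key (F H : int -> int) (cst : 'I_r -> int) :
  (forall (k : 'I_r) b, F (psi e r k b) = H b + cst k) ->
  D F st lt + \sum_(0 <= i < absz (st - A * r%:Z * e%:Z)%R) F (st - (i.+1)%:Z) =
  \sum_(k <- enum 'I_r) \sum_(0 <= i < nk e (s k) A) (H (s k - (i.+1)%:Z) + cst k)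
  + \sum_(k <- enum 'I_r) D H (s k) (lam k).
Proof.
move=> hF.
rewrite addrC -sum_blist; last by lia.
rewrite (perm_big _ perm_tilde) big_allpairs_dep -big_split; apply: eq_bigr => k _ /=.
under eq_bigr do rewrite hF.
rewrite sum_blist; last by have := hA k; rewrite /nk; lia.
by rewrite D_const.
Qed.

End Key.

Lemma size_ulist e r (lam : 'I_r -> seq nat) s A :
  size (@ulist e r lam s A) = sumn [seq nk e (s k) A | k <- enum 'I_r].
Proof.
rewrite size_allpairs_dep; congr sumn; apply: eq_map => k.
by rewrite size_map size_iota.
Qed.

Lemma psi_id e r (k : 'I_r) b : (0 < e)%N ->
  psi e r k b = (b + ((r%:Z - 1) * e%:Z) * g e 0 b) + (r%:Z - k%:Z - 1) * e%:Z.
Proof. move=> he; rewrite psiE // /g subr0; ring. Qed.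

Lemma psi_g e r (k : 'I_r) b c : (0 < e)%N ->
  g e c (psi e r k b) = (g e c b + (r%:Z - 1) * g e 0 b) + (r%:Z - k%:Z - 1).
Proof.
move=> he; rewrite psiE // /g subr0.
set X := (r%:Z - 1) * divz b e%:Z + (r%:Z - k%:Z - 1).
have -> : b + X * e%:Z - c = X * e%:Z + (b - c) by ring.
rewrite divzMDl; last by lia.
rewrite /X; ring.
Qed.

Lemma sum_enum r (F : 'I_r -> int) : \sum_(k <- enum 'I_r) F k = \sum_(k < r) F k.
Proof. by rewrite big_enum. Qed.

Lemma res_countE e r (lam : 'I_r -> seq nat) s c :
  (res_count e lam s c)%:Z = \sum_(k < r) (rc e (s k) (lam k) c)%:Z.
Proof. by rewrite /res_count (big_morph Posz PoszD (erefl _)). Qed.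

Lemma msizeE r (lam : 'I_r -> seq nat) :
  (msize lam)%:Z = \sum_(k < r) (sumn (lam k))%:Z.
Proof. by rewrite /msize (big_morph Posz PoszD (erefl _)). Qed.

Lemma sumD_g e r (lam : 'I_r -> seq nat) s c a : (0 < e)%N -> 0 <= c < e%:Z ->
  \sum_(k <- enum 'I_r) D (fun b => g e c b + a * g e 0 b) (s k) (lam k) =
  (res_count e lam s c)%:Z + a * (res_count e lam s 0)%:Z.
Proof.
move=> he hc; rewrite sum_enum !res_countE mulr_sumr -big_split; apply: eq_bigr => k _ /=.
rewrite (@D_ext _ (fun b => g e c b + a * g e 0 b + 0)); last by move=> b; rewrite addr0.
rewrite D_lin !D_g //; lia.
Qed.

Lemma sumD_id e r (lam : 'I_r -> seq nat) s a : (0 < e)%N ->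
  \sum_(k <- enum 'I_r) D (fun b => b + a * g e 0 b) (s k) (lam k) =
  (msize lam)%:Z + a * (res_count e lam s 0)%:Z.
Proof.
move=> he; rewrite sum_enum msizeE res_countE mulr_sumr -big_split; apply: eq_bigr => k _ /=.
rewrite (@D_ext _ (fun b => id b + a * g e 0 b + 0)); last by move=> b; rewrite addr0.
rewrite D_lin D_id D_g //; lia.
Qed.

Lemma rc_out e s l c : (0 < e)%N -> ~~ (0 <= c < e%:Z) -> rc e s l c = 0%N.
Proof.
move=> he hc; rewrite /rc big1 // => x _; rewrite big1 // => y _.
by case: eqP => // H; exfalso; move: hc; rewrite -H; lia.
Qed.

Lemma mulA_le (A : int) (e : nat) : A <= 0 -> (0 < e)%N -> A * e%:Z <= A.
Proof. move=> hA he; nia. Qed.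

Theorem proposition2p8 (e : nat) (he : (2 <= e)%N) (r : nat) (hr : (1 <= r)%N)
  (s : 'I_r -> int) (lam mu : 'I_r -> seq nat)
  (hlam : forall k, is_part (lam k)) (hmu : forall k, is_part (mu k)) :
  block_equiv e lam s mu s ->
  (exists (lt : seq nat) (st : int) (mt : seq nat) (st' : int),
      Psi_rel e lam s lt st /\ Psi_rel e mu s mt st') /\
  (forall (lt : seq nat) (st : int) (mt : seq nat) (st' : int),
      Psi_rel e lam s lt st -> Psi_rel e mu s mt st' ->
      block_equiv1 e lt st mt st').
Proof.
have he0 : (0 < e)%N by lia.
move=> [_ [hms hres]].
split.
  set N := (\big[maxn/0%N]_(k < r) (`|s k| + size (lam k) + size (mu k))%N)%N.
  have hk : forall k, (`|s k| + size (lam k) + size (mu k) <= N)%N.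
    by move=> k; rewrite /N; apply: leq_bigmax.
  have hAe := @mulA_le (- (N%:Z)) e ltac:(lia) he0.
  have hA1 : forall k, - (N%:Z) * e%:Z <= s k - (size (lam k))%:Z.
    by move=> k; have := hk k; lia.
  have hA2 : forall k, - (N%:Z) * e%:Z <= s k - (size (mu k))%:Z.
    by move=> k; have := hk k; lia.
  have [lt [st H1]] := Psi_exists he0 hr hlam hA1.
  have [mt [st' H2]] := Psi_exists he0 hr hmu hA2.
  by exists lt, st, mt, st'.
move=> lt st mt st' H1 H2.
set N := (`|st| + size lt + `|st'| + size mt +
   \big[maxn/0%N]_(k < r) (`|s k| + size (lam k) + size (mu k))%N)%N.
have hk : forall k, (`|s k| + size (lam k) + size (mu k) <= N)%N.
  move=> k; have : (`|s k| + size (lam k) + size (mu k) <=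
     \big[maxn/0%N]_(k < r) (`|s k| + size (lam k) + size (mu k)))%N by apply: leq_bigmax.
  rewrite /N; lia.
set A := - (N%:Z).
have hAe := @mulA_le A e ltac:(lia) he0.
have hAr := @mulA_le A r ltac:(lia) hr.
have hAre := @mulA_le (A * r%:Z) e ltac:(lia) he0.
have hAl : forall k, A * e%:Z <= s k - (size (lam k))%:Z.
  by move=> k; have := hk k; rewrite /A; lia.
have hAm : forall k, A * e%:Z <= s k - (size (mu k))%:Z.
  by move=> k; have := hk k; rewrite /A; lia.
have hAt : A * r%:Z * e%:Z <= st - (size lt)%:Z by rewrite /A /N in hAre hAr *; lia.
have hAt' : A * r%:Z * e%:Z <= st' - (size mt)%:Z by rewrite /A /N in hAre hAr *; lia.
have p1 := perm_tilde he0 hlam hAl H1 hAt.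
have p2 := perm_tilde he0 hmu hAm H2 hAt'.
have hst : st = st'.
  have := perm_size p1; have := perm_size p2.
  rewrite !size_ulist !size_map !size_iota => <-; lia.
subst st'.
split; first by [].
split.
  rewrite /msize !big_ord1.
  have k1 := key he0 hlam hAl H1 hAt (F := id)
    (H := fun b => b + ((r%:Z - 1) * e%:Z) * g e 0 b)
    (cst := fun k => (r%:Z - k%:Z - 1) * e%:Z) (fun k b => psi_id k b he0).
  have k2 := key he0 hmu hAm H2 hAt' (F := id)
    (H := fun b => b + ((r%:Z - 1) * e%:Z) * g e 0 b)
    (cst := fun k => (r%:Z - k%:Z - 1) * e%:Z) (fun k b => psi_id k b he0).
  rewrite sumD_id // D_id in k1. rewrite sumD_id // D_id in k2.
  rewrite hms hres in k1. lia.
move=> c.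
rewrite /res_count !big_ord1. change (rc e st lt c = rc e st mt c).
case: (boolP (0 <= c < e%:Z)) => hc; last by rewrite !rc_out.
have k1 := key he0 hlam hAl H1 hAt (F := g e c)
    (H := fun b => g e c b + (r%:Z - 1) * g e 0 b)
    (cst := fun k => (r%:Z - k%:Z - 1)) (fun k b => psi_g k b c he0).
have k2 := key he0 hmu hAm H2 hAt' (F := g e c)
    (H := fun b => g e c b + (r%:Z - 1) * g e 0 b)
    (cst := fun k => (r%:Z - k%:Z - 1)) (fun k b => psi_g k b c he0).
rewrite sumD_g // D_g // in k1. rewrite sumD_g // D_g // in k2.
rewrite !hres in k1. lia.
Qed.
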